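(* For all positive integers $n$ and $m$, the Pancake graphs satisfy $\chi(P_{n+m})\leqslant\chi(P_n)+\chi(P_m)$.
   Context: For $n\geqslant 1$, the Pancake graph $P_n$ is the Cayley graph on the symmetric group $\mathrm{Sym}_n$, with permutations written in one-line notation $\pi=[\pi_1\pi_2\ldots\pi_n]$. Its generating set consists of the prefix-reversals $r_i$, $2\leqslant i\leqslant n$. Multiplying $\pi$ on the right by $r_i$ reverses the first $i$ entries: $\pi r_i=[\pi_i\pi_{i-1}\ldots\pi_1\pi_{i+1}\ldots\pi_n]$. Two vertices $\pi,\sigma$ are adjacent iff $\sigma=\pi r_i$ for some $2\leqslant i\leqslant n$. In particular $P_1$ is a single vertex. $\chi$ denotes the chromatic number. *)

(* Defs.v *)
From mathcomp Require Import all_boot all_fingroup.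
Set Implicit Arguments. Unset Strict Implicit. Unset Printing Implicit Defensive.

Definition colorable (T : finType) (e : rel T) (k : nat) : bool :=
  [exists f : {ffun T -> 'I_k}, [forall x, forall y, e x y ==> (f x != f y)]].

Lemma colorable_exists (T : finType) (e : rel T) (irr : irreflexive e) :
  exists k, colorable e k.
Proof.
exists #|T|; apply/existsP; exists [ffun x => enum_rank x].
apply/forallP => x; apply/forallP => y; apply/implyP => exy.
rewrite !ffunE; apply/negP => /eqP /enum_rank_inj Exy.
by move: exy; rewrite Exy irr.
Qed.

Definition chi (T : finType) (e : rel T) (irr : irreflexive e) : nat :=
  ex_minn (colorable_exists irr).

(* Positions are 0-indexed: pi = [pi 0 ... pi (n-1)] in one-line notation.
   The prefix reversal r_i (2 <= i <= n) maps position j to i-1-j if j < i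
   and fixes j otherwise; (pi r_i) j = pi (r_i j). *)

Lemma prefrev_lt (n i : nat) (j : 'I_n) :
  (if j < minn i n then (minn i n).-1 - j else j) < n.
Proof.
case: ifP => [H|_]; last exact: ltn_ord.
have Hm : minn i n <= n by rewrite geq_minr.
have Hp : 0 < minn i n by apply: leq_ltn_trans H.
by apply: leq_ltn_trans (leq_subr _ _) _; rewrite prednK.
Qed.

(* r_i as a map on positions (for 2 <= i <= n, minn i n = i) *)
Definition prefrev (n i : nat) (j : 'I_n) : 'I_n := Ordinal (prefrev_lt i j).

Definition pancake_adj (n : nat) : rel {perm 'I_n} :=
  fun pi sigma =>
    [exists i : 'I_n.+1, (2 <= i) && [forall j, sigma j == pi (prefrev i j)]].

Lemma pancake_irr (n : nat) : irreflexive (@pancake_adj n).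
Proof.
move=> pi; apply/negbTE/negP => /existsP [i /andP [Hi /forallP H]].
have Hin : i <= n by rewrite -ltnS ltn_ord.
have Hn : 0 < n by apply: leq_trans Hin; apply: leq_trans Hi.
have := H (Ordinal Hn); move/eqP/perm_inj/(congr1 val) => /=.
have -> : minn i n = i by apply/minn_idPl.
rewrite (leq_trans _ Hi) // subn0.
by case: (nat_of_ord i) Hi => [|[|k]].
Qed.

Definition chi_pancake (n : nat) : nat := chi (@pancake_irr n).

(* Main.v *)
Require Import Defs.
From mathcomp Require Import all_boot all_fingroup.
From mathcomp Require Import zify.

Section Pat.
Variable N : nat.

Definition Lp (p : {perm 'I_N}) : seq nat := [seq val (p j) | j <- enum 'I_N].

Lemma size_L p : size (Lp p) = N.
Proof. by rewrite size_map size_enum_ord. Qed.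

Lemma nth_L p (j : 'I_N) : nth 0 (Lp p) j = p j.
Proof. by rewrite (nth_map j) ?nth_ord_enum // size_enum_ord. Qed.

Lemma mem_L p v : (v \in Lp p) = (v < N).
Proof.
rewrite /Lp; apply/idP/idP.
  move/mapP => [j _ ->]; exact: ltn_ord.
move=> hv; apply/mapP; exists ((p^-1)%g (Ordinal hv)); first by rewrite mem_enum.
by rewrite permKV.
Qed.

Lemma uniq_L p : uniq (Lp p).
Proof.
rewrite map_inj_uniq ?enum_uniq // => x y /val_inj; exact: perm_inj.
Qed.

Lemma nth_L_lt p x : x < N -> nth 0 (Lp p) x < N.
Proof. by move=> hx; rewrite -(mem_L p) mem_nth // size_L. Qed.

Lemma filter_take (P : pred nat) s i :
  filter P (take i s) = take (count P (take i s)) (filter P s).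
Proof. by rewrite -{3}(cat_take_drop i s) filter_cat take_size_cat // size_filter. Qed.

Lemma filter_drop (P : pred nat) s i :
  filter P (drop i s) = drop (count P (take i s)) (filter P s).
Proof. by rewrite -{3}(cat_take_drop i s) filter_cat drop_size_cat // size_filter. Qed.

Lemma L_rev (p q : {perm 'I_N}) (i : nat) : i <= N -> (forall j, q j = p (prefrev i j)) ->
  Lp q = rev (take i (Lp p)) ++ drop i (Lp p).
Proof.
move=> hi hq; apply: (@eq_from_nth _ 0).
  rewrite size_cat size_rev size_drop size_takel !size_L //; lia.
move=> x; rewrite size_L => hx.
have -> : x = Ordinal hx by [].
rewrite nth_L hq -nth_L /=.
have -> : minn i N = i by apply/minn_idPl.
rewrite nth_cat size_rev size_takel ?size_L //.
case: ifP => xi.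
  rewrite nth_rev ?size_takel ?size_L // nth_take; last by lia.
  by congr nth; lia.
by rewrite nth_drop; congr nth; lia.
Qed.

Lemma head_L (p q : {perm 'I_N}) (i : nat) : 2 <= i <= N -> (forall j, q j = p (prefrev i j)) ->
  nth 0 (Lp q) 0 = nth 0 (Lp p) i.-1.
Proof.
move=> /andP [h2 hi] hq; rewrite (@L_rev p q i hi hq) nth_cat size_rev size_takel ?size_L //.
rewrite (leq_trans _ h2) // nth_rev ?size_takel ?size_L ?(leq_trans _ h2) //.
rewrite nth_take; last by lia.
by congr nth; lia.
Qed.

Lemma count2 (P : pred nat) (s : seq nat) i : 2 <= i <= size s ->
  P (nth 0 s 0) -> P (nth 0 s i.-1) -> 2 <= count P (take i s).
Proof.
case: i => [|[|j]] //= hj h0 hj1.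
rewrite (take_nth 0) // -cats1 count_cat /= hj1.
case: s hj h0 {hj1} => [|x s] //= hj h0.
by rewrite h0 addnC.
Qed.

Variables a k : nat.
Hypothesis hak : a + k <= N.

Definition Pk (v : nat) := (a <= v) && (v < a + k).
Definition w p := [seq v - a | v <- filter Pk (Lp p)].

Lemma w_perm p : perm_eq (w p) (iota 0 k).
Proof.
apply: uniq_perm; last first.
- move=> x; rewrite mem_iota add0n; apply/mapP/idP.
    by case=> v; rewrite mem_filter /Pk => /andP [/andP [h1 h2] _] ->; lia.
  move=> hx; exists (x + a); last by rewrite addnK.
  by rewrite mem_filter mem_L /Pk; apply/andP; split; lia.
- exact: iota_uniq.
rewrite map_inj_in_uniq ?filter_uniq ?uniq_L //.
move=> x y; rewrite !mem_filter /Pk => /andP [/andP [hx _] _] /andP [/andP [hy _] _].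
lia.
Qed.

Lemma size_w p : size (w p) = k.
Proof. by rewrite (perm_size (w_perm p)) size_iota. Qed.

Lemma w_lt p x : x < k -> nth 0 (w p) x < k.
Proof.
move=> hx; have : nth 0 (w p) x \in iota 0 k.
  by rewrite -(perm_mem (w_perm p)) mem_nth // size_w.
by rewrite mem_iota.
Qed.

Definition patf p (x : 'I_k) : 'I_k := Ordinal (@w_lt p x (ltn_ord x)).

Lemma patf_inj p : injective (patf p).
Proof.
move=> x y /(congr1 val) /= /eqP.
rewrite nth_uniq ?size_w ?(perm_uniq (w_perm p)) ?iota_uniq //.
by move/eqP/val_inj.
Qed.

Definition pat p : {perm 'I_k} := perm (@patf_inj p).

Lemma pat_val p x : val (pat p x) = nth 0 (w p) x.
Proof. by rewrite permE. Qed.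

Lemma w_rev (p q : {perm 'I_N}) i : i <= N -> (forall j, q j = p (prefrev i j)) ->
  w q = rev (take (count Pk (take i (Lp p))) (w p)) ++ drop (count Pk (take i (Lp p))) (w p).
Proof.
move=> hi hq; rewrite /w (@L_rev p q i hi hq) filter_cat filter_rev.
by rewrite map_cat map_rev -map_take -map_drop -filter_take -filter_drop.
Qed.

Lemma seq_prefrev (s : seq nat) (j : nat) x : size s = k -> j <= k -> x < k ->
  nth 0 (rev (take j s) ++ drop j s) x =
  nth 0 s (if x < minn j k then (minn j k).-1 - x else x).
Proof.
move=> hs hj hx.
have -> : minn j k = j by apply/minn_idPl.
rewrite nth_cat size_rev size_takel ?hs //.
case: ifP => xj.
  rewrite nth_rev ?size_takel ?hs // nth_take; last by lia.
  by congr nth; lia.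
by rewrite nth_drop; congr nth; lia.
Qed.

Lemma pat_adj (p q : {perm 'I_N}) i : i <= N -> (forall j, q j = p (prefrev i j)) ->
  2 <= count Pk (take i (Lp p)) -> pancake_adj (pat p) (pat q).
Proof.
move=> hi hq h2.
have hjk : count Pk (take i (Lp p)) < k.+1.
  rewrite ltnS -(size_w p) size_map size_filter -{2}(cat_take_drop i (Lp p)).
  by rewrite count_cat leq_addr.
apply/existsP; exists (Ordinal hjk); rewrite /= h2 /=.
apply/forallP => x; apply/eqP/val_inj.
rewrite !pat_val (@w_rev p q i hi hq) seq_prefrev ?size_w //.
Qed.

End Pat.

Lemma chi_min {T : finType} {e : rel T} (irr : irreflexive e) k :
  colorable e k -> chi irr <= k.
Proof. by rewrite /chi; case: ex_minnP => c _; apply. Qed.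

Lemma chi_col {T : finType} {e : rel T} (irr : irreflexive e) :
  colorable e (chi irr).
Proof. by rewrite /chi; case: ex_minnP. Qed.

Theorem theorem2 (n m : nat) (hn : 0 < n) (hm : 0 < m) :
  chi_pancake (n + m) <= chi_pancake n + chi_pancake m.
Proof.
have hs : 0 + n <= n + m by rewrite add0n leq_addr.
have hl : n + m <= n + m by [].
have /existsP [fn Hfn] := chi_col (@pancake_irr n).
have /existsP [fm Hfm] := chi_col (@pancake_irr m).
apply: chi_min; apply/existsP.
exists [ffun p => if nth 0 (Lp (n + m) p) 0 < n
                  then lshift (chi_pancake m) (fn (pat _ _ _ hs p))
                  else rshift (chi_pancake n) (fm (pat _ _ _ hl p))].
apply/forallP => p; apply/forallP => q; apply/implyP => /existsP [i /andP [hi /forallP hq]].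
have hq' : forall j, q j = p (prefrev i j) by move=> j; apply/eqP.
have hiN : i <= n + m by rewrite -ltnS ltn_ord.
have hh := @head_L _ p q i (introT andP (conj hi hiN)) hq'.
have hsz : 1 < i <= size (Lp (n + m) p) by rewrite size_L hi hiN.
have hlt0 : nth 0 (Lp (n + m) p) 0 < n + m by apply: nth_L_lt; lia.
have hlti : nth 0 (Lp (n + m) p) i.-1 < n + m by apply: nth_L_lt; lia.
rewrite !ffunE hh; case: ifP => hp0; case: ifP => hpi.
- rewrite (inj_eq (@lshift_inj _ _)).
  move/forallP: Hfn => /(_ (pat _ _ _ hs p)) /forallP /(_ (pat _ _ _ hs q)) /implyP; apply.
  apply: (@pat_adj _ _ _ hs p q i hiN hq').
  by apply: count2 => //; rewrite /Pk add0n.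
- apply/eqP => /(congr1 val) /= E.
  by have := ltn_ord (fn (pat _ _ _ hs p)); rewrite E ltnNge leq_addr.
- apply/eqP => /(congr1 val) /= E.
  by have := ltn_ord (fn (pat _ _ _ hs q)); rewrite -E ltnNge leq_addr.
- rewrite (inj_eq (@rshift_inj _ _)).
  move/forallP: Hfm => /(_ (pat _ _ _ hl p)) /forallP /(_ (pat _ _ _ hl q)) /implyP; apply.
  apply: (@pat_adj _ _ _ hl p q i hiN hq').
  apply: count2 => //; rewrite /Pk; apply/andP; split => //; by rewrite leqNgt ?hp0 ?hpi.
Qed.
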